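(* Let $k\ge\ell\ge1$ be integers with $k+\ell\ge6$, let $f$ be the function below, and let $\alpha\in[0,\frac12]$. Then the function $$f_*(d)=\alpha(1-\alpha)^{k+\ell}f(d)+\frac{(k-1)^{k-1}\ell^\ell}{(k+\ell-1)^{k+\ell-1}}(1-\alpha)\alpha^{k+\ell}(1-d)$$ attains its maximum over $d\in[0,1]$ at some $d\in\left[\frac{k-1}{k+\ell-1},\frac{k}{k+\ell}\right]$.
   Context: $f:[0,1]\to\mathbb R$ is defined by $f(x)=\frac{(k-1)^{k-1}\ell^\ell}{(k+\ell-1)^{k+\ell-1}}x$ for $x\in[0,\frac{k-1}{k+\ell-1}]$, $f(x)=x^k(1-x)^\ell$ for $x\in[\frac{k-1}{k+\ell-1},\frac{k}{k+\ell}]$, and $f(x)=\frac{k^k\ell^\ell}{(k+\ell)^{k+\ell}}$ for $x\in[\frac{k}{k+\ell},1]$. *)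

(* Defs.v *)
From Stdlib Require Import Reals.
Open Scope R_scope.

Definition c1 (k l : nat) : R :=
  (INR (k - 1)) ^ (k - 1) * (INR l) ^ l / (INR (k + l - 1)) ^ (k + l - 1).

Definition c2 (k l : nat) : R :=
  (INR k) ^ k * (INR l) ^ l / (INR (k + l)) ^ (k + l).

(* The piecewise function f on [0,1] (values outside [0,1] are irrelevant).
   The pieces agree at the breakpoints, so the choice of branch at the
   breakpoints does not matter. *)
Definition f (k l : nat) (x : R) : R :=
  if Rle_dec x (INR (k - 1) / INR (k + l - 1)) then c1 k l * x
  else if Rle_dec x (INR k / INR (k + l)) then x ^ k * (1 - x) ^ l
  else c2 k l.

Definition fstar (k l : nat) (alpha d : R) : R :=
  alpha * (1 - alpha) ^ (k + l) * f k l d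
  + c1 k l * (1 - alpha) * alpha ^ (k + l) * (1 - d).

(* Main.v *)
Require Import Defs.
From Stdlib Require Import Reals.
From Stdlib Require Import Lra Lia.
Open Scope R_scope.

Lemma gen (a b : nat) : (0 < a + b)%nat ->
  (INR a / INR (a+b))^a * (1 - INR a/INR(a+b))^b = INR a ^ a * INR b ^ b / INR (a+b) ^ (a+b).
Proof.
  intros H. assert (Hp : 0 < INR (a+b)) by (apply lt_0_INR; lia).
  replace (1 - INR a / INR (a+b)) with (INR b / INR (a+b))
    by (rewrite plus_INR in *; field; lra).
  unfold Rdiv. rewrite !Rpow_mult_distr, !pow_inv, pow_add.
  field. split; apply pow_nonzero; lra.
Qed.

Theorem lemma2p5 (k l : nat) (alpha : R) :
  (1 <= l)%nat -> (l <= k)%nat -> (6 <= k + l)%nat ->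
  0 <= alpha <= 1 / 2 ->
  exists d : R,
    INR (k - 1) / INR (k + l - 1) <= d <= INR k / INR (k + l) /\
    forall d' : R, 0 <= d' <= 1 -> fstar k l alpha d' <= fstar k l alpha d.
Proof.
  intros Hl Hlk Hkl Ha.
  destruct k as [|k']; [lia|].
  assert (E1 : (S k' - 1 = k')%nat) by lia.
  assert (E2 : (S k' + l - 1 = k' + l)%nat) by lia.
  unfold fstar, Defs.f, Defs.c1, Defs.c2. rewrite E1, E2.
  set (p := INR k' / INR (k'+l)).
  set (q := INR (S k') / INR (S k' + l)).
  set (c1' := INR k' ^ k' * INR l ^ l / INR (k'+l) ^ (k'+l)).
  set (c2' := INR (S k') ^ (S k') * INR l ^ l / INR (S k' + l) ^ (S k' + l)).
  set (A := alpha * (1 - alpha) ^ (S k' + l)).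
  set (B := c1' * (1 - alpha) * alpha ^ (S k' + l)).
  assert (Hc1 : c1' * p = p ^ (S k') * (1 - p) ^ l).
  { unfold c1', p. rewrite <- gen by lia. simpl. ring. }
  assert (Hc2 : c2' = q ^ (S k') * (1 - q) ^ l).
  { unfold c2', q. rewrite <- gen by lia. reflexivity. }
  assert (Hpos1 : 0 < INR (k'+l)) by (apply lt_0_INR; lia).
  assert (Hpos2 : 0 < INR (S k'+l)) by (apply lt_0_INR; lia).
  assert (Hpq : p <= q).
  { unfold p, q. rewrite !plus_INR, S_INR. 
    assert (0 <= INR k') by apply pos_INR.
    assert (1 <= INR l) by (apply (le_INR 1); lia).
    apply Rmult_le_reg_r with ((INR k' + INR l) * (INR k' + 1 + INR l)).
    rewrite plus_INR in Hpos1. nra.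
    field_simplify; [|lra|lra]. nra. }
  assert (Hp0 : 0 <= p).
  { unfold p. unfold Rdiv; apply Rmult_le_pos; [apply pos_INR|left; apply Rinv_0_lt_compat; lra]. }
  assert (Hq1 : q <= 1).
  { unfold q. apply Rmult_le_reg_r with (INR (S k' + l)); [lra|].
    field_simplify; [|lra]. apply le_INR. lia. }
  set (h := fun x => A * (x ^ S k' * (1 - x) ^ l) + B * (1 - x)).
  destruct (continuity_ab_maj h p q Hpq) as [Mx [HM HMr]].
  { intros. unfold h. reg. }
  assert (HA : 0 <= A).
  { unfold A. apply Rmult_le_pos; [lra|]. apply pow_le; lra. }
  assert (Hc1p : 0 <= c1').
  { unfold c1'. unfold Rdiv; apply Rmult_le_pos.
    apply Rmult_le_pos; apply pow_le, pos_INR.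
    left; apply Rinv_0_lt_compat, pow_lt; lra. }
  assert (HAB : B <= A * c1').
  { unfold A, B.
    replace (S k' + l)%nat with (S (k' + l)) by lia.
    simpl. 
    assert (alpha ^ (k'+l) <= (1 - alpha) ^ (k'+l)) by (apply pow_incr; lra).
    assert (0 <= alpha * (1-alpha) * c1') by (apply Rmult_le_pos; [nra|lra]).
    nra. }
  assert (HfM : (if Rle_dec Mx p then c1' * Mx
      else if Rle_dec Mx q then Mx ^ S k' * (1 - Mx) ^ l else c2') = Mx ^ S k' * (1 - Mx) ^ l).
  { destruct (Rle_dec Mx p).
    - replace Mx with p by lra. exact Hc1.
    - destruct (Rle_dec Mx q); [reflexivity|lra]. }
  exists Mx. split; [exact HMr|].
  intros d' Hd'. rewrite HfM. fold (h Mx).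
  destruct (Rle_dec d' p).
  - assert (h p <= h Mx) by (apply HM; lra).
    unfold h in H. rewrite <- Hc1 in H.
    rewrite <- Rmult_assoc in H.
    assert (A * c1' * d' + B * (1 - d') <= A * c1' * p + B * (1 - p)) by nra.
    rewrite <- !Rmult_assoc. unfold h. lra.
  - destruct (Rle_dec d' q).
    + apply (HM d'); lra.
    + assert (h q <= h Mx) by (apply HM; lra).
      unfold h in H. rewrite <- Hc2 in H.
      assert (0 <= B).
      { unfold B. apply Rmult_le_pos; [apply Rmult_le_pos; lra|]. apply pow_le; lra. }
      unfold h. assert (B * (1 - d') <= B * (1 - q)) by nra. lra.
Qed.
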